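(* Let $n\ge3$, $B$ the closed unit disc, $X\in C^3(B,\mathbb R^n)$ a conformally parametrized immersion ($X_u\cdot X_u=W=X_v\cdot X_v$, $X_u\cdot X_v=0$) with a $C^2$ orthonormal normal section $\{N_1,\dots,N_{n-2}\}$, second fundamental forms $L_{\sigma,ij}=X_{u^iu^j}\cdot N_\sigma$, mean curvatures $H_\sigma=\frac{L_{\sigma,11}+L_{\sigma,22}}{2W}$ and torsion coefficients $T^\omega_{\sigma,i}$. Define the Hopf functions $\mathcal H_\sigma:=L_{\sigma,11}-L_{\sigma,22}-2iL_{\sigma,12}$. Then for all $\sigma=1,\dots,n-2$, $$\mathcal H_{\sigma,\overline w}=2H_{\sigma,w}W+\sum_{\omega=1}^{n-2}\Big\{(L_{\omega,22}+iL_{\omega,12})T^\sigma_{\omega,1}-(L_{\omega,21}+iL_{\omega,11})T^\sigma_{\omega,2}\Big\}.$$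
   Context: $w=u+iv$, $\Phi_w=\frac12(\Phi_u-i\Phi_v)$, $\Phi_{\overline w}=\frac12(\Phi_u+i\Phi_v)$. Orthonormal normal section: $N_\sigma\cdot X_{u^i}=0$, $N_\sigma\cdot N_\omega=\delta_{\sigma\omega}$ ($u^1=u,u^2=v$). Torsion coefficients: $T^\omega_{\sigma,i}=N_{\sigma,u^i}\cdot N_\omega$ for $\sigma\ne\omega$, $T^\sigma_{\sigma,i}=0$. *)

(* Defs.v *)
From Stdlib Require Import Reals.
From Coquelicot Require Import Coquelicot.
Open Scope R_scope.

Definition pu (f : R -> R -> R) (u v : R) : R := Derive (fun t => f t v) u.
Definition pv (f : R -> R -> R) (u v : R) : R := Derive (fun t => f u t) v.
(* partial w.r.t. u^i, with u^1 = u, u^2 = v *)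
Definition pd (i : nat) (f : R -> R -> R) : R -> R -> R :=
  if Nat.eqb i 1 then pu f else pv f.

(* Open unit udisc (interior of B). *)
Definition udisc (u v : R) : Prop := u ^ 2 + v ^ 2 < 1.

Fixpoint Ck (k : nat) (U : R -> R -> Prop) (f : R -> R -> R) : Prop :=
  (forall u v, U u v -> continuous (fun p : R * R => f (fst p) (snd p)) (u, v)) /\
  match k with
  | O => True
  | S k' =>
      (forall u v, U u v -> ex_derive (fun t => f t v) u /\ ex_derive (fun t => f u t) v)
      /\ Ck k' U (pu f) /\ Ck k' U (pv f)
  end.

Fixpoint sumR (n : nat) (f : nat -> R) : R :=
  match n with O => 0 | S m => sumR m f + f m end.
Fixpoint sumC (n : nat) (f : nat -> C) : C :=
  match n with O => RtoC 0 | S m => Cplus (sumC m f) (f m) end.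

(* A map into R^n, given by its components k = 0..n-1. *)
Definition VecFun := nat -> R -> R -> R.

Definition dotF (n : nat) (A B : VecFun) (u v : R) : R :=
  sumR n (fun k => A k u v * B k u v).

Definition pdV (i : nat) (A : VecFun) : VecFun := fun k => pd i (A k).

Definition Lff (n : nat) (X : VecFun) (N : nat -> VecFun) (s i j : nat) (u v : R) : R :=
  dotF n (pdV i (pdV j X)) (N s) u v.

Definition Wf (n : nat) (X : VecFun) (u v : R) : R := dotF n (pdV 1 X) (pdV 1 X) u v.

Definition Hmean (n : nat) (X : VecFun) (N : nat -> VecFun) (s : nat) (u v : R) : R :=
  (Lff n X N s 1 1 u v + Lff n X N s 2 2 u v) / (2 * Wf n X u v).

(* Torsion coefficients: Tor n N om s i = T^om_{s,i} = N_{s,u^i} . N_om (s <> om), 0 if s = om. *)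
Definition Tor (n : nat) (N : nat -> VecFun) (om s i : nat) (u v : R) : R :=
  if Nat.eqb s om then 0 else dotF n (pdV i (N s)) (N om) u v.

Definition Hopf (n : nat) (X : VecFun) (N : nat -> VecFun) (s : nat) (u v : R) : C :=
  (Lff n X N s 1 1 u v - Lff n X N s 2 2 u v, - (2 * Lff n X N s 1 2 u v)).

Definition Cpu (F : R -> R -> C) (u v : R) : C :=
  (pu (fun a b => fst (F a b)) u v, pu (fun a b => snd (F a b)) u v).
Definition Cpv (F : R -> R -> C) (u v : R) : C :=
  (pv (fun a b => fst (F a b)) u v, pv (fun a b => snd (F a b)) u v).
Definition d_w (F : R -> R -> C) (u v : R) : C :=
  Cmult (RtoC (1/2)) (Cminus (Cpu F u v) (Cmult Ci (Cpv F u v))).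
Definition d_wbar (F : R -> R -> C) (u v : R) : C :=
  Cmult (RtoC (1/2)) (Cplus (Cpu F u v) (Cmult Ci (Cpv F u v))).
Definition cplx (f : R -> R -> R) : R -> R -> C := fun u v => RtoC (f u v).

(* Main.v *)
Require Import Defs.
From Stdlib Require Import Reals.
From Coquelicot Require Import Coquelicot.
Open Scope R_scope.
Module Pars.
From mathcomp Require Import all_boot all_algebra.
From mathcomp Require Import Rstruct.
Import GRing.Theory.

Lemma sumR_big (n : nat) (f : nat -> R) : sumR n f = (\sum_(i < n) f i)%R.
Proof.
elim: n => [|n IH]; first by rewrite big_ord0.
by rewrite big_ord_recr /= IH.
Qed.

Lemma parseval (n:nat) (e : nat -> nat -> R) (A B : nat -> R) :
 (forall i j, lt i n -> lt j n -> sumR n (fun k => e i k * e j k)%R = if Nat.eqb i j then 1 else 0) ->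
 (sumR n (fun k => A k * B k) = sumR n (fun i => sumR n (fun k => A k * e i k) * sumR n (fun k => B k * e i k)))%R.
Proof.
move=> H.
Local Open Scope ring_scope.
pose E : 'M[R]_n := \matrix_(i < n, k < n) e i k.
have EE : (E *m E^T = 1%:M)%R.
  apply/matrixP => i j; rewrite !mxE.
  rewrite (eq_bigr (fun k : 'I_n => e i k * e j k)); last by move=> k _; rewrite !mxE.
  rewrite -(sumR_big n (fun k => e i k * e j k)) H; last 2 first; try (apply/ltP; apply: ltn_ord).
  case: (eqVneq i j) => [->|ne].
    by rewrite PeanoNat.Nat.eqb_refl.
  case: (PeanoNat.Nat.eqb_spec i j) => // eij.
  by move: ne; rewrite -val_eqE /= eij eqxx.
have EE2 := mulmx1C EE.
rewrite !sumR_big.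
rewrite [RHS](eq_bigr (fun i : 'I_n => \sum_(k < n) \sum_(l < n) A k * B l * (E i k * E i l))); last first.
  move=> i _; rewrite !sumR_big big_distrl /=; apply: eq_bigr => k _; rewrite big_distrr /=.
  by apply: eq_bigr => l _; rewrite !mxE mulrACA.
rewrite exchange_big /=; apply: eq_bigr => k _; rewrite exchange_big /=.
transitivity (\sum_(l<n) A k * B l * (E^T *m E) k l).
  rewrite EE2 (bigD1 k) //= big1 ?mxE ?eqxx ?mulr1 ?addr0 //.
  by move=> l nl; rewrite !mxE eq_sym (negPf nl) mulr0.
apply: eq_bigr => l _; rewrite mxE big_distrr /=; apply: eq_bigr => i _.
by rewrite !mxE.
Qed.
End Pars.

From Stdlib Require Import Lia Lra.

Lemma parseval (n:nat) (e : nat -> nat -> R) (A B : nat -> R) :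
 (forall i j, (i < n)%nat -> (j < n)%nat -> sumR n (fun k => e i k * e j k) = if Nat.eqb i j then 1 else 0) ->
 sumR n (fun k => A k * B k) = sumR n (fun i => sumR n (fun k => A k * e i k) * sumR n (fun k => B k * e i k)).
Proof. intros H. exact (Pars.parseval n e A B H). Qed.

Lemma sumR_ext n f g : (forall k, (k<n)%nat -> f k = g k) -> sumR n f = sumR n g.
Proof. induction n; simpl; intros H; auto. rewrite IHn; [rewrite H|]; auto; intros; apply H; lia. Qed.
Lemma sumR_plus n f g : sumR n (fun k => f k + g k) = sumR n f + sumR n g.
Proof. induction n; simpl; [ring| rewrite IHn; ring]. Qed.
Lemma sumR_minus n f g : sumR n (fun k => f k - g k) = sumR n f - sumR n g.
Proof. induction n; simpl; [ring| rewrite IHn; ring]. Qed.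
Lemma sumR_mulr n f c : sumR n (fun k => f k * c) = sumR n f * c.
Proof. induction n; simpl; [ring| rewrite IHn; ring]. Qed.
Lemma sumR_shift m f : sumR (S m) f = f 0%nat + sumR m (fun j => f (S j)).
Proof. induction m; simpl in *; [ring| rewrite IHm; ring]. Qed.
Lemma sumR_shift2 m f : (2 <= m)%nat -> sumR m f = f 0%nat + f 1%nat + sumR (m-2) (fun j => f (S (S j))).
Proof. intros H. destruct m as [|[|m]]; try lia. replace (S (S m) - 2)%nat with m by lia.
 rewrite sumR_shift, sumR_shift. ring. Qed.
Lemma sumC_fst m f : fst (sumC m f) = sumR m (fun j => fst (f j)).
Proof. induction m; simpl; auto. rewrite IHm; auto. Qed.
Lemma sumC_snd m f : snd (sumC m f) = sumR m (fun j => snd (f j)).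
Proof. induction m; simpl; auto. rewrite IHm; auto. Qed.

Lemma Derive_sum_prod n (a b : nat -> R -> R) x :
  (forall k, (k<n)%nat -> ex_derive (a k) x /\ ex_derive (b k) x) ->
  ex_derive (fun t => sumR n (fun k => a k t * b k t)) x /\
  Derive (fun t => sumR n (fun k => a k t * b k t)) x =
  sumR n (fun k => Derive (a k) x * b k x + a k x * Derive (b k) x).
Proof.
induction n; intros H; simpl.
- split. apply ex_derive_const. apply Derive_const.
- destruct IHn as [E D]. { intros; apply H; lia. }
  destruct (H n) as [Ea Eb]; [lia|].
  split. apply (ex_derive_plus (fun t => sumR n (fun k => a k t * b k t)) (fun t => a n t * b n t)); auto. apply ex_derive_mult; auto.
  rewrite Derive_plus; auto. rewrite Derive_mult; auto. rewrite D; auto.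
  apply ex_derive_mult; auto.
Qed.

Definition smooth1 (n : nat) (A : VecFun) (u v : R) : Prop :=
  forall k, (k < n)%nat -> ex_derive (fun t => A k t v) u /\ ex_derive (fun t => A k u t) v.

Lemma dot_pu n A B u v : smooth1 n A u v -> smooth1 n B u v ->
 ex_derive (fun t => dotF n A B t v) u /\
 pu (dotF n A B) u v = dotF n (pdV 1 A) B u v + dotF n A (pdV 1 B) u v.
Proof. intros HA HB.
 destruct (Derive_sum_prod n (fun k t => A k t v) (fun k t => B k t v) u) as [E D].
 { intros k Hk; split; [apply HA|apply HB]; auto. }
 split; [exact E|]. unfold pu, dotF. rewrite D. rewrite <- sumR_plus. reflexivity.
Qed.
Lemma dot_pv n A B u v : smooth1 n A u v -> smooth1 n B u v ->
 ex_derive (fun t => dotF n A B u t) v /\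
 pv (dotF n A B) u v = dotF n (pdV 2 A) B u v + dotF n A (pdV 2 B) u v.
Proof. intros HA HB.
 destruct (Derive_sum_prod n (fun k t => A k u t) (fun k t => B k u t) v) as [E D].
 { intros k Hk; split; [apply HA|apply HB]; auto. }
 split; [exact E|]. unfold pv, dotF. rewrite D. rewrite <- sumR_plus. reflexivity.
Qed.
Lemma dot_pd i n A B u v : smooth1 n A u v -> smooth1 n B u v ->
 pd i (dotF n A B) u v = dotF n (pdV i A) B u v + dotF n A (pdV i B) u v.
Proof. intros HA HB. unfold pdV, pd. destruct (Nat.eqb i 1).
 - apply (dot_pu n A B u v HA HB). - apply (dot_pv n A B u v HA HB). Qed.

Lemma dot_comm n A B u v : dotF n A B u v = dotF n B A u v.
Proof. unfold dotF. apply sumR_ext. intros; ring. Qed.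
Lemma dot_extl n A A' B u v : (forall k, (k<n)%nat -> A k u v = A' k u v) -> dotF n A B u v = dotF n A' B u v.
Proof. intros H. unfold dotF. apply sumR_ext. intros k Hk; rewrite H; auto. Qed.

Lemma Ck_ex k U f u v : Ck (S k) U f -> U u v -> ex_derive (fun t => f t v) u /\ ex_derive (fun t => f u t) v.
Proof. simpl. intros [_ [H _]] Hu. apply H; auto. Qed.
Lemma Ck_pu k U f : Ck (S k) U f -> Ck k U (pu f).
Proof. intros [_ [_ [H _]]]; auto. Qed.
Lemma Ck_pv k U f : Ck (S k) U f -> Ck k U (pv f).
Proof. intros [_ [_ [_ H]]]; auto. Qed.
Lemma Ck_pd i k U f : Ck (S k) U f -> Ck k U (pd i f).
Proof. unfold pd; destruct (Nat.eqb i 1); [apply Ck_pu|apply Ck_pv]. Qed.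
Lemma Ck_cont k U f u v : Ck k U f -> U u v -> continuous (fun p : R * R => f (fst p) (snd p)) (u,v).
Proof. destruct k; simpl; intros [H _]; auto. Qed.
Lemma Ck_down k U f : Ck (S k) U f -> Ck k U f.
Proof. revert f; induction k; intros f H.
 - simpl in *. destruct H as [H _]. split; auto.
 - destruct H as [H1 [H2 [H3 H4]]]. split; [auto|split;[auto|split; apply IHk; auto]].
Qed.

Lemma udisc_loc u v : udisc u v -> locally_2d udisc u v.
Proof.
 unfold udisc; intros H.
 set (r := 1 - (u^2 + v^2)).
 assert (Hr : 0 < r) by (unfold r; lra).
 assert (HM : 0 < u^2 + v^2 + 4) by nra.
 assert (Hd : 0 < Rmin 1 (r / (u^2+v^2+4))).
 { apply Rmin_pos; [lra|]. apply Rdiv_lt_0_compat; lra. }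
 set (d := Rmin 1 (r / (u ^ 2 + v ^ 2 + 4))) in *.
 exists (mkposreal d Hd). intros a b Ha Hb.
 change (Rabs (a - u) < d) in Ha. change (Rabs (b - v) < d) in Hb. unfold udisc.
 assert (d1 : d <= 1) by apply Rmin_l.
 assert (d2 : d * (u^2+v^2+4) <= r).
 { assert (d <= r / (u ^ 2 + v ^ 2 + 4)) by apply Rmin_r.
   apply Rmult_le_compat_r with (r := u^2+v^2+4) in H0; [|lra].
   unfold Rdiv in H0. rewrite Rmult_assoc, Rinv_l in H0; lra. }
 apply Rabs_def2 in Ha. apply Rabs_def2 in Hb.
 set (h := a - u) in *. set (k := b - v) in *.
 assert (Ea : a = u + h) by (unfold h; ring).
 assert (Eb : b = v + k) by (unfold k; ring).
 rewrite Ea, Eb.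
 assert (P1 : 0 <= (d - h) * (u+1)^2) by (apply Rmult_le_pos; nra).
 assert (P2 : 0 <= (d + h) * (u-1)^2) by (apply Rmult_le_pos; nra).
 assert (P3 : 0 <= (d - k) * (v+1)^2) by (apply Rmult_le_pos; nra).
 assert (P4 : 0 <= (d + k) * (v-1)^2) by (apply Rmult_le_pos; nra).
 assert (Q1 : h^2 < d) by nra.
 assert (Q2 : k^2 < d) by nra.
 unfold r in d2. nra.
Qed.

Lemma pd_ext i f g u v : (forall a b, udisc a b -> f a b = g a b) -> udisc u v -> pd i f u v = pd i g u v.
Proof. intros H Hu. unfold pd; destruct (Nat.eqb i 1); unfold pu, pv; apply Derive_ext_loc.
 - apply (filter_imp (fun t => udisc t v)). intros; apply H; auto.
   apply (locally_2d_1d_const_y udisc u v (udisc_loc u v Hu)).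
 - apply (filter_imp (fun t => udisc u t)). intros; apply H; auto.
   apply (locally_2d_1d_const_x udisc u v (udisc_loc u v Hu)).
Qed.
Lemma pd_const i c u v : pd i (fun _ _ => c) u v = 0.
Proof. unfold pd; destruct (Nat.eqb i 1); unfold pu, pv; apply Derive_const. Qed.

Lemma schwarz2 f u v : Ck 2 udisc f -> udisc u v -> pu (pv f) u v = pv (pu f) u v.
Proof.
 intros Hf Hu. unfold pu, pv. apply Schwarz.
 - destruct (udisc_loc u v Hu) as [d Hd]. exists d. intros a b Ha Hb.
   assert (Hab := Hd a b Ha Hb).
   destruct (Ck_ex 1 udisc f a b Hf Hab) as [E1 E2].
   destruct (Ck_ex 0 udisc (pv f) a b (Ck_pv 1 udisc f Hf) Hab) as [E3 _].
   destruct (Ck_ex 0 udisc (pu f) a b (Ck_pu 1 udisc f Hf) Hab) as [_ E4].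
   repeat split; [exact E1|exact E2|exact E3|exact E4].
 - apply continuity_2d_pt_filterlim.
   exact (Ck_cont 0 udisc (pu (pv f)) u v (Ck_pu 0 udisc _ (Ck_pv 1 udisc f Hf)) Hu).
 - apply continuity_2d_pt_filterlim.
   exact (Ck_cont 0 udisc (pv (pu f)) u v (Ck_pv 0 udisc _ (Ck_pu 1 udisc f Hf)) Hu).
Qed.

Lemma third1 f u v : Ck 3 udisc f -> udisc u v -> pv (pu (pu f)) u v = pu (pu (pv f)) u v.
Proof. intros Hf Hu.
 rewrite <- (schwarz2 (pu f) u v (Ck_pu 2 udisc f Hf) Hu).
 apply (pd_ext 1 (pv (pu f)) (pu (pv f))); auto.
 intros a b Hab. symmetry. apply schwarz2; auto. apply Ck_down; auto.
Qed.
Lemma third2 f u v : Ck 3 udisc f -> udisc u v -> pv (pu (pv f)) u v = pu (pv (pv f)) u v.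
Proof. intros Hf Hu. symmetry. apply schwarz2; auto. apply Ck_pv; auto. Qed.

Lemma sumR_div n f g q : q <> 0 -> sumR n (fun k => f k * (g k / q)) = sumR n (fun k => f k * g k) / q.
Proof. intros Hq; induction n; simpl; [field; auto| rewrite IHn; field; auto]. Qed.
Lemma sumR_divl n f g q : q <> 0 -> sumR n (fun k => f k / q * g k) = sumR n (fun k => f k * g k) / q.
Proof. intros Hq; induction n; simpl; [field; auto| rewrite IHn; field; auto]. Qed.
Lemma sumR_div2 n f g q : q <> 0 -> sumR n (fun k => f k / q * (g k / q)) = sumR n (fun k => f k * g k) / (q * q).
Proof. intros Hq; induction n; simpl; [field; auto| rewrite IHn; field; auto]. Qed.

Lemma pu_minus f g u v : ex_derive (fun t => f t v) u -> ex_derive (fun t => g t v) u ->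
  pu (fun a b => f a b - g a b) u v = pu f u v - pu g u v.
Proof. intros; unfold pu; apply Derive_minus; auto. Qed.
Lemma pv_minus f g u v : ex_derive (fun t => f u t) v -> ex_derive (fun t => g u t) v ->
  pv (fun a b => f a b - g a b) u v = pv f u v - pv g u v.
Proof. intros; unfold pv; apply Derive_minus; auto. Qed.
Lemma pu_oppscal c f u v : pu (fun a b => - (c * f a b)) u v = - (c * pu f u v).
Proof. unfold pu. rewrite Derive_opp, Derive_scal. reflexivity. Qed.
Lemma pv_oppscal c f u v : pv (fun a b => - (c * f a b)) u v = - (c * pv f u v).
Proof. unfold pv. rewrite Derive_opp, Derive_scal. reflexivity. Qed.
Lemma pu_zero u v : pu (fun _ _ => 0) u v = 0.
Proof. unfold pu; apply Derive_const. Qed.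
Lemma pv_zero u v : pv (fun _ _ => 0) u v = 0.
Proof. unfold pv; apply Derive_const. Qed.
Lemma pu_quot f g h u v : ex_derive (fun t => f t v) u -> ex_derive (fun t => g t v) u ->
  ex_derive (fun t => h t v) u -> h u v <> 0 ->
  pu (fun a b => (f a b + g a b) / (2 * h a b)) u v =
  ((pu f u v + pu g u v) * (2 * h u v) - (f u v + g u v) * (2 * pu h u v)) / (2 * h u v) ^ 2.
Proof. intros Ef Eg Eh Hh. unfold pu.
 rewrite (Derive_div (fun t => f t v + g t v) (fun t => 2 * h t v)).
 - rewrite (Derive_plus (fun t => f t v) (fun t => g t v)); auto. rewrite Derive_scal. reflexivity.
 - apply (ex_derive_plus (fun t => f t v) (fun t => g t v)); auto.
 - apply ex_derive_scal; auto.
 - intro H0. apply Hh. lra.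
Qed.
Lemma pv_quot f g h u v : ex_derive (fun t => f u t) v -> ex_derive (fun t => g u t) v ->
  ex_derive (fun t => h u t) v -> h u v <> 0 ->
  pv (fun a b => (f a b + g a b) / (2 * h a b)) u v =
  ((pv f u v + pv g u v) * (2 * h u v) - (f u v + g u v) * (2 * pv h u v)) / (2 * h u v) ^ 2.
Proof. intros Ef Eg Eh Hh. unfold pv.
 rewrite (Derive_div (fun t => f u t + g u t) (fun t => 2 * h u t)).
 - rewrite (Derive_plus (fun t => f u t) (fun t => g u t)); auto. rewrite Derive_scal. reflexivity.
 - apply (ex_derive_plus (fun t => f u t) (fun t => g u t)); auto.
 - apply ex_derive_scal; auto.
 - intro H0. apply Hh. lra.
Qed.

Lemma fst_Cplus a b : fst (Cplus a b) = fst a + fst b. Proof. reflexivity. Qed.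
Lemma snd_Cplus a b : snd (Cplus a b) = snd a + snd b. Proof. reflexivity. Qed.
Lemma fst_Cmult a b : fst (Cmult a b) = fst a * fst b - snd a * snd b. Proof. reflexivity. Qed.
Lemma snd_Cmult a b : snd (Cmult a b) = fst a * snd b + snd a * fst b. Proof. reflexivity. Qed.
Lemma fst_RtoC x : fst (RtoC x) = x. Proof. reflexivity. Qed.
Lemma snd_RtoC x : snd (RtoC x) = 0. Proof. reflexivity. Qed.

Theorem mainTheorem7 (n : nat) (X : VecFun) (N : nat -> VecFun) :
  (3 <= n)%nat ->
  (* X in C^3 (components) *)
  (forall k, (k < n)%nat -> Ck 3 udisc (X k)) ->
  (* conformal immersion *)
  (forall u v, udisc u v ->
     0 < Wf n X u v /\
     dotF n (pdV 2 X) (pdV 2 X) u v = Wf n X u v /\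
     dotF n (pdV 1 X) (pdV 2 X) u v = 0) ->
  (* C^2 orthonormal normal section N_1, ..., N_{n-2} *)
  (forall s k, (1 <= s <= n - 2)%nat -> (k < n)%nat -> Ck 2 udisc (N s k)) ->
  (forall s i u v, (1 <= s <= n - 2)%nat -> (1 <= i <= 2)%nat -> udisc u v ->
     dotF n (N s) (pdV i X) u v = 0) ->
  (forall s om u v, (1 <= s <= n - 2)%nat -> (1 <= om <= n - 2)%nat -> udisc u v ->
     dotF n (N s) (N om) u v = if Nat.eqb s om then 1 else 0) ->
  forall s u v, (1 <= s <= n - 2)%nat -> udisc u v ->
    d_wbar (Hopf n X N s) u v =
    Cplus
      (Cmult (Cmult (RtoC 2) (d_w (cplx (Hmean n X N s)) u v)) (RtoC (Wf n X u v)))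
      (sumC (n - 2) (fun j =>
         let om := S j in
         Cminus
           (Cmult (Lff n X N om 2 2 u v, Lff n X N om 1 2 u v) (RtoC (Tor n N s om 1 u v)))
           (Cmult (Lff n X N om 2 1 u v, Lff n X N om 1 1 u v) (RtoC (Tor n N s om 2 u v))))).
Proof.
intros Hn HX Hconf HN Hperp Horth s u v Hs Hu.
assert (SX2 : forall i j, smooth1 n (pdV i (pdV j X)) u v).
{ intros i j k Hk. exact (Ck_ex 0 udisc _ u v (Ck_pd i 1 udisc _ (Ck_pd j 2 udisc _ (HX k Hk))) Hu). }
assert (SX1 : forall i, smooth1 n (pdV i X) u v).
{ intros i k Hk. exact (Ck_ex 1 udisc _ u v (Ck_pd i 2 udisc _ (HX k Hk)) Hu). }
assert (SN : forall om, (1 <= om <= n-2)%nat -> smooth1 n (N om) u v).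
{ intros om Hom k Hk. exact (Ck_ex 1 udisc _ u v (HN om k Hom Hk) Hu). }
destruct (Hconf u v Hu) as [Wpos [W22 W12]].
assert (S12 : forall a b, udisc a b -> forall k, (k<n)%nat -> pdV 1 (pdV 2 X) k a b = pdV 2 (pdV 1 X) k a b).
{ intros a b Hab k Hk. exact (schwarz2 (X k) a b (Ck_down 2 udisc _ (HX k Hk)) Hab). }
assert (D12 : forall B, dotF n (pdV 1 (pdV 2 X)) B u v = dotF n (pdV 2 (pdV 1 X)) B u v).
{ intros B; apply dot_extl; intros; apply S12; auto. }
assert (T1 : forall B, dotF n (pdV 2 (pdV 1 (pdV 1 X))) B u v = dotF n (pdV 1 (pdV 1 (pdV 2 X))) B u v).
{ intros B; apply dot_extl; intros k Hk. exact (third1 (X k) u v (HX k Hk) Hu). }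
assert (T2 : forall B, dotF n (pdV 2 (pdV 1 (pdV 2 X))) B u v = dotF n (pdV 1 (pdV 2 (pdV 2 X))) B u v).
{ intros B; apply dot_extl; intros k Hk. exact (third2 (X k) u v (HX k Hk) Hu). }
set (W := Wf n X u v) in *.
set (Wu := pu (Wf n X) u v). set (Wv := pv (Wf n X) u v).
assert (C11 : dotF n (pdV 1 (pdV 1 X)) (pdV 1 X) u v = Wu / 2).
{ assert (E : Wu = dotF n (pdV 1 (pdV 1 X)) (pdV 1 X) u v + dotF n (pdV 1 X) (pdV 1 (pdV 1 X)) u v).
  { unfold Wu; change (pu (Wf n X) u v) with (pd 1 (dotF n (pdV 1 X) (pdV 1 X)) u v). apply dot_pd; auto. }
  rewrite (dot_comm n (pdV 1 X) (pdV 1 (pdV 1 X))) in E. lra. }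
assert (C21 : dotF n (pdV 2 (pdV 1 X)) (pdV 1 X) u v = Wv / 2).
{ assert (E : Wv = dotF n (pdV 2 (pdV 1 X)) (pdV 1 X) u v + dotF n (pdV 1 X) (pdV 2 (pdV 1 X)) u v).
  { unfold Wv; change (pv (Wf n X) u v) with (pd 2 (dotF n (pdV 1 X) (pdV 1 X)) u v). apply dot_pd; auto. }
  rewrite (dot_comm n (pdV 1 X) (pdV 2 (pdV 1 X))) in E. lra. }
assert (C12 : dotF n (pdV 1 (pdV 2 X)) (pdV 2 X) u v = Wu / 2).
{ assert (E : Wu = pd 1 (dotF n (pdV 2 X) (pdV 2 X)) u v).
  { unfold Wu; change (pu (Wf n X) u v) with (pd 1 (Wf n X) u v). apply pd_ext; auto. intros a b Hab. destruct (Hconf a b Hab) as [_ [E _]]. symmetry; exact E. }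
  rewrite dot_pd in E by auto. rewrite (dot_comm n (pdV 2 X) (pdV 1 (pdV 2 X))) in E. lra. }
assert (C22 : dotF n (pdV 2 (pdV 2 X)) (pdV 2 X) u v = Wv / 2).
{ assert (E : Wv = pd 2 (dotF n (pdV 2 X) (pdV 2 X)) u v).
  { unfold Wv; change (pv (Wf n X) u v) with (pd 2 (Wf n X) u v). apply pd_ext; auto. intros a b Hab. destruct (Hconf a b Hab) as [_ [E _]]. symmetry; exact E. }
  rewrite dot_pd in E by auto. rewrite (dot_comm n (pdV 2 X) (pdV 2 (pdV 2 X))) in E. lra. }
assert (C12_1 : dotF n (pdV 1 (pdV 2 X)) (pdV 1 X) u v = Wv / 2) by (rewrite D12; exact C21).
assert (C11_2 : dotF n (pdV 1 (pdV 1 X)) (pdV 2 X) u v = - (Wv/2)).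
{ assert (E : pd 1 (dotF n (pdV 1 X) (pdV 2 X)) u v = 0).
  { transitivity (pd 1 (fun _ _ => 0) u v); [apply pd_ext; [|auto]|apply pd_const].
    intros a b Hab. destruct (Hconf a b Hab) as [_ [_ E]]; exact E. }
  rewrite dot_pd in E by auto. rewrite (dot_comm n (pdV 1 X) (pdV 1 (pdV 2 X))) in E. lra. }
assert (C22_1 : dotF n (pdV 2 (pdV 2 X)) (pdV 1 X) u v = - (Wu/2)).
{ assert (E : pd 2 (dotF n (pdV 1 X) (pdV 2 X)) u v = 0).
  { transitivity (pd 2 (fun _ _ => 0) u v); [apply pd_ext; [|auto]|apply pd_const].
    intros a b Hab. destruct (Hconf a b Hab) as [_ [_ E]]; exact E. }
  rewrite dot_pd in E by auto. rewrite <- D12 in E. rewrite (dot_comm n (pdV 1 X) (pdV 2 (pdV 2 X))) in E. lra. }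
assert (LS : forall om, Lff n X N om 2 1 u v = Lff n X N om 1 2 u v).
{ intros om. unfold Lff. symmetry. apply D12. }
assert (NX : forall i k, (1<=i<=2)%nat -> dotF n (pdV k (N s)) (pdV i X) u v = - Lff n X N s k i u v).
{ intros i k Hi. assert (E : pd k (dotF n (N s) (pdV i X)) u v = 0).
  { transitivity (pd k (fun _ _ => 0) u v); [apply pd_ext; [|auto]|apply pd_const].
    intros a b Hab; apply Hperp; auto. }
  rewrite dot_pd in E by auto. unfold Lff. rewrite (dot_comm n (pdV k (pdV i X)) (N s)). lra. }
assert (NN : forall k om, (1<=om<=n-2)%nat -> dotF n (pdV k (N s)) (N om) u v = Tor n N om s k u v /\ Tor n N s om k u v = - Tor n N om s k u v).
{ intros k om Hom. assert (E : pd k (dotF n (N s) (N om)) u v = 0).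
  { transitivity (pd k (fun _ _ => if Nat.eqb s om then 1 else 0) u v); [apply pd_ext; [|auto]|apply pd_const].
    intros a b Hab; apply Horth; auto. }
  rewrite dot_pd in E by auto. unfold Tor.
  destruct (Nat.eqb_spec s om) as [<-|ne].
  - rewrite Nat.eqb_refl. rewrite (dot_comm n (N s) (pdV k (N s))) in E. split; lra.
  - rewrite (proj2 (Nat.eqb_neq om s)) by auto. rewrite (dot_comm n (N s) (pdV k (N om))) in E. split; lra. }
assert (PV : forall A B, dotF n A B u v =
   (dotF n A (pdV 1 X) u v * dotF n B (pdV 1 X) u v + dotF n A (pdV 2 X) u v * dotF n B (pdV 2 X) u v) / W
   + sumR (n-2) (fun j => dotF n A (N (S j)) u v * dotF n B (N (S j)) u v)).
{ intros A B. set (q := sqrt W).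
  assert (Hq : 0 < q) by (apply sqrt_lt_R0; auto).
  assert (Hqq : q * q = W) by (apply sqrt_sqrt; lra).
  assert (Hq0 : q <> 0) by lra.
  unfold dotF at 1.
  rewrite (parseval n (fun i k => match i with 0%nat => pdV 1 X k u v / q | 1%nat => pdV 2 X k u v / q | S (S j) => N (S j) k u v end) (fun k => A k u v) (fun k => B k u v)).
  - rewrite sumR_shift2 by lia. cbv beta iota.
    rewrite !sumR_div by auto. unfold dotF. rewrite <- Hqq. field. auto.
  - intros i j Hi Hj.
    destruct i as [|[|i]]; destruct j as [|[|j]]; cbv beta iota; simpl Nat.eqb.
    + rewrite sumR_div2 by auto. change (sumR n (fun k => pdV 1 X k u v * pdV 1 X k u v)) with W. rewrite Hqq. field. lra.
    + rewrite sumR_div2 by auto. change (sumR n (fun k => pdV 1 X k u v * pdV 2 X k u v)) with (dotF n (pdV 1 X) (pdV 2 X) u v). rewrite W12. field. lra.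
    + rewrite sumR_divl by auto. change (sumR n (fun k => pdV 1 X k u v * N (S j) k u v)) with (dotF n (pdV 1 X) (N (S j)) u v).
      rewrite dot_comm, Hperp by (auto; lia). field. lra.
    + rewrite sumR_div2 by auto. change (sumR n (fun k => pdV 2 X k u v * pdV 1 X k u v)) with (dotF n (pdV 2 X) (pdV 1 X) u v). rewrite dot_comm, W12. field. lra.
    + rewrite sumR_div2 by auto. change (sumR n (fun k => pdV 2 X k u v * pdV 2 X k u v)) with (dotF n (pdV 2 X) (pdV 2 X) u v). rewrite W22. fold W. rewrite Hqq. field. lra.
    + rewrite sumR_divl by auto. change (sumR n (fun k => pdV 2 X k u v * N (S j) k u v)) with (dotF n (pdV 2 X) (N (S j)) u v).
      rewrite dot_comm, Hperp by (auto; lia). field. lra.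
    + rewrite sumR_div by auto. change (sumR n (fun k => N (S i) k u v * pdV 1 X k u v)) with (dotF n (N (S i)) (pdV 1 X) u v).
      rewrite Hperp by (auto; lia). field. lra.
    + rewrite sumR_div by auto. change (sumR n (fun k => N (S i) k u v * pdV 2 X k u v)) with (dotF n (N (S i)) (pdV 2 X) u v).
      rewrite Hperp by (auto; lia). field. lra.
    + change (sumR n (fun k => N (S i) k u v * N (S j) k u v)) with (dotF n (N (S i)) (N (S j)) u v).
      rewrite Horth by (auto; lia). simpl Nat.eqb. reflexivity. }
assert (Lv11 : pv (Lff n X N s 1 1) u v = dotF n (pdV 2 (pdV 1 (pdV 1 X))) (N s) u v + dotF n (pdV 1 (pdV 1 X)) (pdV 2 (N s)) u v).
{ change (pv (Lff n X N s 1 1) u v) with (pd 2 (dotF n (pdV 1 (pdV 1 X)) (N s)) u v). apply dot_pd; auto. }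
assert (Lu12 : pu (Lff n X N s 1 2) u v = dotF n (pdV 1 (pdV 1 (pdV 2 X))) (N s) u v + dotF n (pdV 1 (pdV 2 X)) (pdV 1 (N s)) u v).
{ change (pu (Lff n X N s 1 2) u v) with (pd 1 (dotF n (pdV 1 (pdV 2 X)) (N s)) u v). apply dot_pd; auto. }
assert (Lv12 : pv (Lff n X N s 1 2) u v = dotF n (pdV 2 (pdV 1 (pdV 2 X))) (N s) u v + dotF n (pdV 1 (pdV 2 X)) (pdV 2 (N s)) u v).
{ change (pv (Lff n X N s 1 2) u v) with (pd 2 (dotF n (pdV 1 (pdV 2 X)) (N s)) u v). apply dot_pd; auto. }
assert (Lu22 : pu (Lff n X N s 2 2) u v = dotF n (pdV 1 (pdV 2 (pdV 2 X))) (N s) u v + dotF n (pdV 2 (pdV 2 X)) (pdV 1 (N s)) u v).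
{ change (pu (Lff n X N s 2 2) u v) with (pd 1 (dotF n (pdV 2 (pdV 2 X)) (N s)) u v). apply dot_pd; auto. }
set (P1 := sumR (n-2) (fun j => Lff n X N (S j) 1 2 u v * Tor n N (S j) s 2 u v)).
set (P2 := sumR (n-2) (fun j => Lff n X N (S j) 2 2 u v * Tor n N (S j) s 1 u v)).
set (P3 := sumR (n-2) (fun j => Lff n X N (S j) 1 1 u v * Tor n N (S j) s 2 u v)).
set (P4 := sumR (n-2) (fun j => Lff n X N (S j) 1 2 u v * Tor n N (S j) s 1 u v)).
assert (Ere : pv (Lff n X N s 1 2) u v - pu (Lff n X N s 2 2) u v =
   - ((Lff n X N s 1 1 u v + Lff n X N s 2 2 u v) * Wu / (2 * W)) + (P1 - P2)).
{ rewrite Lv12, Lu22, T2.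
  rewrite (PV (pdV 1 (pdV 2 X)) (pdV 2 (N s))), (PV (pdV 2 (pdV 2 X)) (pdV 1 (N s))).
  rewrite C12_1, C12, C22_1, C22. rewrite !NX by lia. rewrite LS.
  assert (Q1 : sumR (n-2) (fun j => dotF n (pdV 1 (pdV 2 X)) (N (S j)) u v * dotF n (pdV 2 (N s)) (N (S j)) u v) = P1).
  { apply sumR_ext; intros j Hj. rewrite (proj1 (NN 2%nat (S j) ltac:(lia))). reflexivity. }
  assert (Q2 : sumR (n-2) (fun j => dotF n (pdV 2 (pdV 2 X)) (N (S j)) u v * dotF n (pdV 1 (N s)) (N (S j)) u v) = P2).
  { apply sumR_ext; intros j Hj. rewrite (proj1 (NN 1%nat (S j) ltac:(lia))). reflexivity. }
  rewrite Q1, Q2. field. lra. }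
assert (Eim : pv (Lff n X N s 1 1) u v - pu (Lff n X N s 1 2) u v =
   (Lff n X N s 1 1 u v + Lff n X N s 2 2 u v) * Wv / (2 * W) + (P3 - P4)).
{ rewrite Lv11, Lu12, T1.
  rewrite (PV (pdV 1 (pdV 1 X)) (pdV 2 (N s))), (PV (pdV 1 (pdV 2 X)) (pdV 1 (N s))).
  rewrite C11, C11_2, C12_1, C12. rewrite !NX by lia. rewrite LS.
  assert (Q3 : sumR (n-2) (fun j => dotF n (pdV 1 (pdV 1 X)) (N (S j)) u v * dotF n (pdV 2 (N s)) (N (S j)) u v) = P3).
  { apply sumR_ext; intros j Hj. rewrite (proj1 (NN 2%nat (S j) ltac:(lia))). reflexivity. }
  assert (Q4 : sumR (n-2) (fun j => dotF n (pdV 1 (pdV 2 X)) (N (S j)) u v * dotF n (pdV 1 (N s)) (N (S j)) u v) = P4).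
  { apply sumR_ext; intros j Hj. rewrite (proj1 (NN 1%nat (S j) ltac:(lia))). reflexivity. }
  rewrite Q3, Q4. field. lra. }
assert (EL : forall i j, ex_derive (fun t => Lff n X N s i j t v) u /\ ex_derive (fun t => Lff n X N s i j u t) v).
{ intros i j. split.
  - exact (proj1 (dot_pu n _ _ u v (SX2 i j) (SN s Hs))).
  - exact (proj1 (dot_pv n _ _ u v (SX2 i j) (SN s Hs))). }
assert (EW : ex_derive (fun t => Wf n X t v) u /\ ex_derive (fun t => Wf n X u t) v).
{ split.
  - exact (proj1 (dot_pu n _ _ u v (SX1 1%nat) (SX1 1%nat))).
  - exact (proj1 (dot_pv n _ _ u v (SX1 1%nat) (SX1 1%nat))). }
assert (HB1 : fst (d_wbar (Hopf n X N s) u v) = 1/2 * ((pu (Lff n X N s 1 1) u v - pu (Lff n X N s 2 2) u v) - (-(2 * pv (Lff n X N s 1 2) u v)))).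
{ unfold d_wbar, Cmult, Cplus, Ci, RtoC, Cpu, Cpv, Hopf; cbn [fst snd].
  rewrite (pu_minus (Lff n X N s 1 1) (Lff n X N s 2 2)) by (apply EL).
  rewrite (pv_oppscal 2 (Lff n X N s 1 2)). ring. }
assert (HB2 : snd (d_wbar (Hopf n X N s) u v) = 1/2 * (-(2 * pu (Lff n X N s 1 2) u v) + (pv (Lff n X N s 1 1) u v - pv (Lff n X N s 2 2) u v))).
{ unfold d_wbar, Cmult, Cplus, Ci, RtoC, Cpu, Cpv, Hopf; cbn [fst snd].
  rewrite (pv_minus (Lff n X N s 1 1) (Lff n X N s 2 2)) by (apply EL).
  rewrite (pu_oppscal 2 (Lff n X N s 1 2)). ring. }
assert (HW1 : fst (d_w (cplx (Hmean n X N s)) u v) = 1/2 * (((pu (Lff n X N s 1 1) u v + pu (Lff n X N s 2 2) u v) * (2 * W) - (Lff n X N s 1 1 u v + Lff n X N s 2 2 u v) * (2 * Wu)) / (2 * W) ^ 2)).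
{ unfold d_w, Cpu, Cpv, cplx; unfold Cmult, Cminus, Cplus, Copp, Ci, RtoC; cbn [fst snd].
  unfold Hmean. rewrite (pu_quot (Lff n X N s 1 1) (Lff n X N s 2 2) (Wf n X) u v (proj1 (EL 1%nat 1%nat)) (proj1 (EL 2%nat 2%nat)) (proj1 EW)); [|fold W; lra].
  rewrite pv_zero. unfold W, Wu. ring. }
assert (HW2 : snd (d_w (cplx (Hmean n X N s)) u v) = - (1/2) * (((pv (Lff n X N s 1 1) u v + pv (Lff n X N s 2 2) u v) * (2 * W) - (Lff n X N s 1 1 u v + Lff n X N s 2 2 u v) * (2 * Wv)) / (2 * W) ^ 2)).
{ unfold d_w, Cpu, Cpv, cplx; unfold Cmult, Cminus, Cplus, Copp, Ci, RtoC; cbn [fst snd].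
  unfold Hmean. rewrite (pv_quot (Lff n X N s 1 1) (Lff n X N s 2 2) (Wf n X) u v (proj2 (EL 1%nat 1%nat)) (proj2 (EL 2%nat 2%nat)) (proj2 EW)); [|fold W; lra].
  rewrite pu_zero. unfold W, Wv. ring. }
assert (SC1 : fst (sumC (n - 2) (fun j =>
         let om := S j in
         Cminus
           (Cmult (Lff n X N om 2 2 u v, Lff n X N om 1 2 u v) (RtoC (Tor n N s om 1 u v)))
           (Cmult (Lff n X N om 2 1 u v, Lff n X N om 1 1 u v) (RtoC (Tor n N s om 2 u v))))) = P1 - P2).
{ rewrite sumC_fst. unfold P1, P2. rewrite <- sumR_minus. apply sumR_ext. intros j Hj.
  unfold Cminus, Cplus, Copp, Cmult, RtoC; cbn [fst snd].
  rewrite (proj2 (NN 1%nat (S j) ltac:(lia))), (proj2 (NN 2%nat (S j) ltac:(lia))), LS. ring. }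
assert (SC2 : snd (sumC (n - 2) (fun j =>
         let om := S j in
         Cminus
           (Cmult (Lff n X N om 2 2 u v, Lff n X N om 1 2 u v) (RtoC (Tor n N s om 1 u v)))
           (Cmult (Lff n X N om 2 1 u v, Lff n X N om 1 1 u v) (RtoC (Tor n N s om 2 u v))))) = P3 - P4).
{ rewrite sumC_snd. unfold P3, P4. rewrite <- sumR_minus. apply sumR_ext. intros j Hj.
  unfold Cminus, Cplus, Copp, Cmult, RtoC; cbn [fst snd].
  rewrite (proj2 (NN 1%nat (S j) ltac:(lia))), (proj2 (NN 2%nat (S j) ltac:(lia))), LS. ring. }
apply injective_projections.
- rewrite HB1, fst_Cplus, SC1, !fst_Cmult, !snd_Cmult, !fst_RtoC, !snd_RtoC, ?HW1, ?HW2.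
  replace (pv (Lff n X N s 1 2) u v) with (pu (Lff n X N s 2 2) u v - ((Lff n X N s 1 1 u v + Lff n X N s 2 2 u v) * Wu / (2 * W)) + (P1 - P2)) by lra.
  field. lra.
- rewrite HB2, snd_Cplus, SC2. repeat first [rewrite fst_Cmult | rewrite snd_Cmult]. rewrite !fst_RtoC, !snd_RtoC, ?HW1, ?HW2.
  replace (pv (Lff n X N s 1 1) u v) with (pu (Lff n X N s 1 2) u v + (Lff n X N s 1 1 u v + Lff n X N s 2 2 u v) * Wv / (2 * W) + (P3 - P4)) by lra.
  field. lra.
Qed.
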